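(* Let $n\ge2$ be an integer and let $w>0$ be fixed. For $\alpha>0$ let $\overline{G}_\alpha(x)=\int_x^\infty\frac{1}{\Gamma(\alpha)}e^{-t}t^{\alpha-1}\,dt$, $x\ge0$. For $\mu\ge0$ define $$I_1(\mu)=\int_0^{\mu/n}ue^{2nu}\overline{G}_{2n}\!\left(\frac{u(1+nw)}{w}\right)du,\qquad I_2(\mu)=\int_0^{\mu/n}e^{2nu}\overline{G}_{2n+1}\!\left(\frac{u(1+nw)}{w}\right)du,$$ $$I_3(\mu)=\frac{\mu}{1+nI_2(\mu)},\qquad I_4(\mu)=\frac{I_1(\mu)}{1+nI_2(\mu)},\qquad k(\mu)=\frac{1+\mu-2n^2I_1(\mu)}{1+nI_2(\mu)}.$$ Then: (i) $\lim_{\mu\to\infty}I_1(\mu)=\left(\frac{1+nw}{1-nw}\right)^{2n}\left[\frac{w}{1-nw}-\frac{1}{4n^2}\right]+\frac{1}{4n^2}$ if $0<w<\frac1n$, and $=\infty$ if $w\ge\frac1n$; (ii) $\lim_{\mu\to\infty}I_2(\mu)=\frac{1}{2n}\left[\left(\frac{1+nw}{1-nw}\right)^{2n+1}-1\right]$ if $0<w<\frac1n$, and $=\infty$ if $w\ge\frac1n$; (iii) $\lim_{\mu\to\infty}I_3(\mu)=\infty$ if $0<w<\frac1n$, and $=0$ if $w\ge\frac1n$; (iv) $\lim_{\mu\to\infty}I_4(\mu)=\dfrac{\lim_{\mu\to\infty}I_1(\mu)}{1+n\lim_{\mu\to\infty}I_2(\mu)}$ if $0<w<\frac1n$, and $=\frac{2w}{1+nw}$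 if $w\ge\frac1n$; (v) $\lim_{\mu\to\infty}k(\mu)=\infty$ if $0<w<\frac1n$, and $=-\frac{4n^2w}{1+nw}$ if $w\ge\frac1n$; (vi) $\sup_{\mu\ge0}k(\mu)=\infty$ if $0<w<\frac1n$, and $=1$ if $w\ge\frac1n$; (vii) if $w\ge\frac1n$ then $\inf_{\mu\ge0}k(\mu)=-\frac{4n^2w}{1+nw}$; and for every $w>0$, $\inf_{\mu\ge0}k(\mu)\ge-\frac{4n^2w}{1+nw}$.
   Context: $\Gamma$ denotes the gamma function, so $\overline{G}_\alpha$ is the survival function of the Gamma$(\alpha,1)$ distribution. *)

(* Defs.v *)
From Stdlib Require Import Reals.
From Coquelicot Require Import Coquelicot.
Open Scope R_scope.

(* Gamma density numerator e^{-t} t^{a-1}; only evaluated at t > 0. *)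
Definition gdens (a t : R) : R := exp (- t) * Rpower t (a - 1).

Definition Gamma (a : R) : R :=
  RInt_gen (gdens a) (at_right 0) (Rbar_locally p_infty).

Definition Gbar (a x : R) : R :=
  RInt_gen (gdens a) (at_right x) (Rbar_locally p_infty) / Gamma a.

Definition I1 (n : nat) (w mu : R) : R :=
  RInt (fun u => u * exp (2 * INR n * u) *
                 Gbar (2 * INR n) (u * (1 + INR n * w) / w)) 0 (mu / INR n).

Definition I2 (n : nat) (w mu : R) : R :=
  RInt (fun u => exp (2 * INR n * u) *
                 Gbar (2 * INR n + 1) (u * (1 + INR n * w) / w)) 0 (mu / INR n).

Definition I3 (n : nat) (w mu : R) : R := mu / (1 + INR n * I2 n w mu).

Definition I4 (n : nat) (w mu : R) : R := I1 n w mu / (1 + INR n * I2 n w mu).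

Definition kfun (n : nat) (w mu : R) : R :=
  (1 + mu - 2 * (INR n) ^ 2 * I1 n w mu) / (1 + INR n * I2 n w mu).

Definition I1lim (n : nat) (w : R) : R :=
  ((1 + INR n * w) / (1 - INR n * w)) ^ (2 * n)
    * (w / (1 - INR n * w) - 1 / (4 * (INR n) ^ 2))
  + 1 / (4 * (INR n) ^ 2).

Definition I2lim (n : nat) (w : R) : R :=
  1 / (2 * INR n) * (((1 + INR n * w) / (1 - INR n * w)) ^ (2 * n + 1) - 1).

(* Main.v *)
Require Import Defs.
From Stdlib Require Import Reals.
From Coquelicot Require Import Coquelicot.
From Stdlib Require Import Lra Lia Psatz Factorial.
Open Scope R_scope.

Fixpoint Q (m : nat) (y : R) : R :=
  match m with O => 0 | S p => Q p y + y ^ p / INR (Factorial.fact p) end.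

Lemma factpos k : 0 < INR (Factorial.fact k).
Proof. apply lt_0_INR, lt_O_fact. Qed.

Lemma Q_nonneg m y : 0 <= y -> 0 <= Q m y.
Proof.
  intros Hy; induction m; simpl; [lra|].
  assert (0 <= y ^ m / INR (Factorial.fact m)).
  { apply Rdiv_le_0_compat; [apply pow_le; lra| apply factpos]. }
  lra.
Qed.

Lemma Q_S_ge1 m y : 0 <= y -> 1 <= Q (S m) y.
Proof.
  intros Hy; induction m.
  - simpl. lra.
  - change (Q (S (S m)) y) with (Q (S m) y + y ^ (S m) / INR (Factorial.fact (S m))).
    assert (0 <= y ^ (S m) / INR (Factorial.fact (S m))).
    { apply Rdiv_le_0_compat; [apply pow_le; lra| apply factpos]. }
    lra.
Qed.

Lemma Q_sum m y : Q (S m) y = sum_f_R0 (fun k => y ^ k / INR (Factorial.fact k)) m.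
Proof.
  induction m.
  - simpl. lra.
  - change (Q (S (S m)) y) with (Q (S m) y + y ^ (S m) / INR (Factorial.fact (S m))).
    rewrite IHm. reflexivity.
Qed.

Lemma exp_ge_Q m y : 0 <= y -> Q m y <= exp y.
Proof.
  intros Hy. destruct m.
  - simpl. pose proof (exp_pos y); lra.
  - rewrite Q_sum. apply exp_ge_taylor; auto.
Qed.

Lemma pow_term_le_exp m y : 0 <= y -> y ^ m / INR (Factorial.fact m) <= exp y.
Proof.
  intros Hy. eapply Rle_trans; [|apply (exp_ge_Q (S m)); auto].
  simpl. pose proof (Q_nonneg m y Hy). lra.
Qed.

Lemma Q_bound m y : 1 <= y -> y * Q m y <= INR m * y ^ m.
Proof.
  intros Hy; induction m.
  - simpl. lra.
  - change (Q (S m) y) with (Q m y + y ^ m / INR (Factorial.fact m)).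
    rewrite S_INR.
    assert (y ^ m <= y ^ (S m)).
    { simpl. assert (0 <= y ^ m) by (apply pow_le; lra). nra. }
    assert (y * (y ^ m / INR (Factorial.fact m)) <= y ^ S m).
    { simpl. pose proof (factpos m).
      assert (1 <= INR (Factorial.fact m)).
      { apply (le_INR 1). pose proof (lt_O_fact m). lia. }
      assert (0 <= y * y ^ m) by (apply Rmult_le_pos; [lra| apply pow_le; lra]).
      unfold Rdiv. rewrite <- Rmult_assoc.
      apply Rmult_le_reg_r with (INR (Factorial.fact m)); auto.
      rewrite Rmult_assoc, Rinv_l by lra. nra. }
    assert (0 <= INR m) by apply pos_INR.
    nra.
Qed.

Lemma Q_derive m y : is_derive (Q (S m)) y (Q m y).
Proof.
  induction m.
  - apply (is_derive_ext (fun _ => 1)).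
    { intros t; simpl; field. }
    simpl. apply (@is_derive_const R_AbsRing R_NormedModule 1).
  - change (Q (S (S m))) with (fun y => Q (S m) y + y ^ (S m) / INR (Factorial.fact (S m))).
    change (Q (S m) y) with (Q m y + y ^ m / INR (Factorial.fact m)).
    apply @is_derive_plus; [exact IHm|].
    apply (is_derive_ext (fun t => / INR (Factorial.fact (S m)) * t ^ (S m))).
    { intros t. unfold Rdiv. apply Rmult_comm. }
    replace (y ^ m / INR (Factorial.fact m)) with (/ INR (Factorial.fact (S m)) * (INR (S m) * 1 * y ^ Nat.pred (S m))).
    2:{ simpl pred. rewrite fact_simpl, mult_INR. pose proof (factpos m) as Hf. assert (INR (S m) <> 0) as Hs by (apply not_0_INR; discriminate). assert (INR (fact m) <> 0) as Hf2 by (apply Rgt_not_eq; exact Hf). field. split; assumption. }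

    apply is_derive_scal. apply is_derive_pow. apply @is_derive_id.
Qed.

Lemma Q_at0 m : Q (S m) 0 = 1.
Proof.
  induction m; simpl; [field|].
  simpl in IHm. rewrite IHm. rewrite Rmult_0_l. unfold Rdiv; ring.
Qed.

Lemma expQ_bound m t : 1 <= t -> 0 <= exp (- t) * Q m t <= INR m * INR (fact m) / t.
Proof.
  intros Ht.
  pose proof (Q_bound m t Ht). pose proof (Q_nonneg m t ltac:(lra)).
  pose proof (pow_term_le_exp m t ltac:(lra)).
  pose proof (factpos m). pose proof (exp_pos (-t)). pose proof (pos_INR m).
  assert (Hp : 0 <= t ^ m) by (apply pow_le; lra).
  assert (He : exp (-t) * exp t = 1) by (rewrite <- exp_plus; replace (-t+t) with 0 by ring; apply exp_0).
  split; [nra|].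
  apply Rmult_le_reg_r with t; [lra|].
  replace (INR m * INR (fact m) / t * t) with (INR m * INR (fact m)) by (field; lra).
  assert (t ^ m <= INR (fact m) * exp t).
  { apply Rmult_le_reg_r with (/ INR (fact m)). apply Rinv_0_lt_compat; lra.
    replace (INR (fact m) * exp t * / INR (fact m)) with (exp t) by (field; lra). exact H1. }
  assert (exp (-t) * Q m t * t = exp (-t) * (t * Q m t)) by ring.
  rewrite H6.
  apply Rle_trans with (exp (-t) * (INR m * t ^ m)).
  { apply Rmult_le_compat_l; lra. }
  apply Rle_trans with (exp (-t) * (INR m * (INR (fact m) * exp t))).
  { apply Rmult_le_compat_l; [lra|]. apply Rmult_le_compat_l; lra. }
  replace (exp (-t) * (INR m * (INR (fact m) * exp t))) with (INR m * INR (fact m) * (exp (-t) * exp t)) by ring.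
  rewrite He. lra.
Qed.

Lemma lim_expQ m : is_lim (fun t => exp (- t) * Q m t) p_infty 0.
Proof.
  apply is_lim_spec. intros eps. simpl.
  pose proof (cond_pos eps) as He.
  exists (Rmax 1 (INR m * INR (fact m) / eps)).
  intros t Ht.
  assert (H1 : 1 < t) by (eapply Rle_lt_trans; [apply Rmax_l| exact Ht]).
  assert (H2 : INR m * INR (fact m) / eps < t) by (eapply Rle_lt_trans; [apply Rmax_r| exact Ht]).
  destruct (expQ_bound m t) as [Ha Hb]; [lra|].
  rewrite Rminus_0_r, Rabs_pos_eq by lra.
  eapply Rle_lt_trans; [exact Hb|].
  pose proof (factpos m). pose proof (pos_INR m).
  apply Rmult_lt_reg_r with t; [lra|].
  replace (INR m * INR (fact m) / t * t) with (INR m * INR (fact m)) by (field; lra).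
  apply Rmult_lt_reg_r with (/ eps). apply Rinv_0_lt_compat; lra.
  replace (pos eps * t * / eps) with t by (field; lra). exact H2.
Qed.

Definition FF (k : nat) (t : R) : R := - INR (fact k) * (exp (- t) * Q (S k) t).

Lemma expm_derive t : is_derive (fun t => exp (- t)) t (- exp (- t)).
Proof. auto_derive; auto; ring. Qed.

Lemma FF_derive k t : is_derive (FF k) t (exp (- t) * t ^ k).
Proof.
  unfold FF.
  assert (Hd : is_derive (fun t => exp (- t) * Q (S k) t) t
     ((- exp (-t)) * Q (S k) t + exp (-t) * Q k t)).
  { apply (is_derive_mult (fun t => exp (-t)) (Q (S k))).
    - apply expm_derive.
    - apply Q_derive.
    - intros; apply Rmult_comm. }
  apply (is_derive_scal _ _ (- INR (fact k))) in Hd.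
  replace (exp (- t) * t ^ k) with (- INR (fact k) * (- exp (- t) * Q (S k) t + exp (- t) * Q k t)); [exact Hd|].
  change (Q (S k) t) with (Q k t + t ^ k / INR (fact k)).
  pose proof (factpos k). field. lra.
Qed.

Lemma gdens_eq k t : 0 < t -> gdens (INR k + 1) t = exp (- t) * t ^ k.
Proof.
  intros Ht. unfold gdens. replace (INR k + 1 - 1) with (INR k) by ring.
  rewrite Rpower_pow; auto.
Qed.

Lemma FF_lim k : is_lim (FF k) p_infty 0.
Proof.
  pose proof (is_lim_scal_l _ (- INR (fact k)) _ _ (lim_expQ (S k))) as H.
  simpl in H. rewrite Rmult_0_r in H. exact H.
Qed.

Lemma is_RInt_gen_gdens k x : 0 <= x ->
  is_RInt_gen (gdens (INR k + 1)) (at_right x) (Rbar_locally p_infty) (- FF k x).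
Proof.
  intros Hx.
  apply (is_RInt_gen_ext (Derive (FF k))).
  - apply (Filter_prod _ _ _ (fun a => x < a) (fun b => x < b)).
    + unfold at_right, within. apply filter_forall. auto.
    + exists x. auto.
    + intros a b Ha Hb t [H1 H2]. simpl in *.
      rewrite (is_derive_unique _ _ _ (FF_derive k t)).
      assert (x < Rmin a b) by (apply Rmin_glb_lt; auto).
      rewrite gdens_eq; [reflexivity| lra].
  - replace (- FF k x) with (0 - FF k x) by ring.
    apply is_RInt_gen_Derive.
    + apply filter_forall. intros ab t _. eexists. apply FF_derive.
    + apply filter_forall. intros ab t _.
      apply (continuous_ext (fun t => exp (- t) * t ^ k)).
      { intros; symmetry; apply is_derive_unique, FF_derive. }
      apply (@ex_derive_continuous R_AbsRing R_NormedModule). auto_derive. auto.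
    + eapply filterlim_filter_le_1; [apply (filter_le_within (F := locally x) (fun u => x < u))|].
      apply (@ex_derive_continuous R_AbsRing R_NormedModule). eexists. apply FF_derive.
    + exact (FF_lim k).
Qed.

Lemma Gbar_eq a k x : a = INR k + 1 -> 0 <= x -> Gbar a x = exp (- x) * Q (S k) x.
Proof.
  intros -> Hx. unfold Gbar, Gamma.
  rewrite (is_RInt_gen_unique _ _ (is_RInt_gen_gdens k x Hx)).
  rewrite (is_RInt_gen_unique _ _ (is_RInt_gen_gdens k 0 (Rle_refl 0))).
  unfold FF. rewrite Q_at0, Ropp_0, exp_0. pose proof (factpos k). field. lra.
Qed.

Lemma Q_ex_derive m y : ex_derive (Q m) y.
Proof.
  destruct m.
  - simpl. apply (ex_derive_const (K := R_AbsRing) (V := R_NormedModule) 0).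
  - eexists. apply Q_derive.
Qed.

Lemma Q_cont m y : continuous (Q m) y.
Proof. apply (@ex_derive_continuous R_AbsRing R_NormedModule). apply Q_ex_derive. Qed.

Definition G (d : R) (j : nat) (u : R) : R := FF j (d * u) / d ^ (S j).

Lemma G_derive d j u : d <> 0 -> is_derive (G d j) u (exp (- (d * u)) * u ^ j).
Proof.
  intros Hd. unfold G.
  assert (H : is_derive (fun u => FF j (d * u)) u (d * (exp (- (d * u)) * (d * u) ^ j))).
  { apply (is_derive_comp (FF j) (fun u => d * u)). apply FF_derive.
    auto_derive; auto; ring. }
  apply (is_derive_ext (fun u => / d ^ S j * FF j (d * u))).
  { intros t; unfold Rdiv; apply Rmult_comm. }
  replace (exp (- (d * u)) * u ^ j) with (/ d ^ S j * (d * (exp (- (d * u)) * (d * u) ^ j))).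
  - apply is_derive_scal. exact H.
  - rewrite Rpow_mult_distr. simpl. field. split; auto. apply pow_nonzero; auto.
Qed.

Fixpoint H2 (c d : R) (m : nat) (u : R) : R :=
  match m with O => 0 | S p => H2 c d p u + c ^ p / INR (fact p) * G d p u end.
Fixpoint H1 (c d : R) (m : nat) (u : R) : R :=
  match m with O => 0 | S p => H1 c d p u + c ^ p / INR (fact p) * G d (S p) u end.

Definition f2m (c d : R) (m : nat) (u : R) : R := exp (- (d * u)) * Q m (c * u).
Definition f1m (c d : R) (m : nat) (u : R) : R := u * exp (- (d * u)) * Q m (c * u).

Lemma H2_derive c d m u : d <> 0 -> is_derive (H2 c d m) u (f2m c d m u).
Proof.
  intros Hd. unfold f2m. induction m.
  - simpl. rewrite Rmult_0_r. apply (@is_derive_const R_AbsRing R_NormedModule 0).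
  - simpl Q. 
    replace (exp (- (d * u)) * (Q m (c * u) + (c * u) ^ m / INR (fact m))) with
      (exp (- (d * u)) * Q m (c * u) + c ^ m / INR (fact m) * (exp (- (d * u)) * u ^ m)).
    2:{ rewrite Rpow_mult_distr. pose proof (factpos m). field. lra. }
    apply (is_derive_plus (H2 c d m) (fun u => c ^ m / INR (fact m) * G d m u)); auto.
    apply is_derive_scal. apply G_derive; auto.
Qed.

Lemma H1_derive c d m u : d <> 0 -> is_derive (H1 c d m) u (f1m c d m u).
Proof.
  intros Hd. unfold f1m. induction m.
  - simpl. rewrite Rmult_0_r. apply (@is_derive_const R_AbsRing R_NormedModule 0).
  - simpl Q. 
    replace (u * exp (- (d * u)) * (Q m (c * u) + (c * u) ^ m / INR (fact m))) with
      (u * exp (- (d * u)) * Q m (c * u) + c ^ m / INR (fact m) * (exp (- (d * u)) * u ^ (S m))).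
    2:{ rewrite Rpow_mult_distr. simpl. pose proof (factpos m). field. lra. }
    apply (is_derive_plus (H1 c d m) (fun u => c ^ m / INR (fact m) * G d (S m) u)); auto.
    apply is_derive_scal. apply G_derive; auto.
Qed.

Lemma f2m_cont c d m u : continuous (f2m c d m) u.
Proof.
  unfold f2m. apply (continuous_mult (fun u => exp (- (d * u))) (fun u => Q m (c * u))).
  - apply (@ex_derive_continuous R_AbsRing R_NormedModule). auto_derive. auto.
  - apply (continuous_comp (fun u => c * u) (Q m)).
    + apply (@ex_derive_continuous R_AbsRing R_NormedModule). auto_derive. auto.
    + apply Q_cont.
Qed.

Lemma f1m_cont c d m u : continuous (f1m c d m) u.
Proof.
  unfold f1m. apply (continuous_mult (fun u => u * exp (- (d * u))) (fun u => Q m (c * u))).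
  - apply (@ex_derive_continuous R_AbsRing R_NormedModule). auto_derive. auto.
  - apply (continuous_comp (fun u => c * u) (Q m)).
    + apply (@ex_derive_continuous R_AbsRing R_NormedModule). auto_derive. auto.
    + apply Q_cont.
Qed.

Lemma RInt_f2m c d m a b : d <> 0 -> RInt (f2m c d m) a b = H2 c d m b - H2 c d m a.
Proof.
  intros Hd. apply is_RInt_unique.
  apply (is_RInt_derive (H2 c d m) (f2m c d m)).
  - intros; apply H2_derive; auto.
  - intros; apply f2m_cont.
Qed.

Lemma RInt_f1m c d m a b : d <> 0 -> RInt (f1m c d m) a b = H1 c d m b - H1 c d m a.
Proof.
  intros Hd. apply is_RInt_unique.
  apply (is_RInt_derive (H1 c d m) (f1m c d m)).
  - intros; apply H1_derive; auto.
  - intros; apply f1m_cont.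
Qed.

Lemma ex_RInt_f2m c d m a b : ex_RInt (f2m c d m) a b.
Proof. apply (@ex_RInt_continuous R_CompleteNormedModule). intros; apply f2m_cont. Qed.
Lemma ex_RInt_f1m c d m a b : ex_RInt (f1m c d m) a b.
Proof. apply (@ex_RInt_continuous R_CompleteNormedModule). intros; apply f1m_cont. Qed.

Lemma G_lim d j : 0 < d -> is_lim (G d j) p_infty 0.
Proof.
  intros Hd. unfold G.
  apply (is_lim_ext (fun u => / d ^ S j * FF j (d * u))).
  { intros; unfold Rdiv; apply Rmult_comm. }
  replace (Finite 0) with (Rbar_mult (/ d ^ S j) 0) by (simpl; f_equal; ring).
  apply is_lim_scal_l.
  apply (is_lim_comp (FF j) (fun u => d * u) p_infty 0 p_infty).
  - apply FF_lim.
  - replace p_infty with (Rbar_mult d p_infty) at 2.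
    + apply is_lim_scal_l. apply is_lim_id.
    + simpl. destruct (Rle_dec 0 d); [|lra]. destruct (Rle_lt_or_eq_dec 0 d r); [reflexivity| lra].
  - exists 0. intros; discriminate.
Qed.

Lemma H2_lim c d m : 0 < d -> is_lim (H2 c d m) p_infty 0.
Proof.
  intros Hd. induction m.
  - simpl. apply is_lim_const.
  - simpl. replace (Finite 0) with (Finite (0 + c ^ m / INR (fact m) * 0)) by (f_equal; ring).
    apply is_lim_plus'; auto.
    apply (is_lim_scal_l (G d m) (c ^ m / INR (fact m)) p_infty 0). apply G_lim; auto.
Qed.

Lemma H1_lim c d m : 0 < d -> is_lim (H1 c d m) p_infty 0.
Proof.
  intros Hd. induction m.
  - simpl. apply is_lim_const.
  - simpl. replace (Finite 0) with (Finite (0 + c ^ m / INR (fact m) * 0)) by (f_equal; ring).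
    apply is_lim_plus'; auto.
    apply (is_lim_scal_l (G d (S m)) (c ^ m / INR (fact m)) p_infty 0). apply G_lim; auto.
Qed.

Lemma G_at0 d j : d <> 0 -> G d j 0 = - INR (fact j) / d ^ S j.
Proof.
  intros. unfold G, FF. rewrite Rmult_0_r, Q_at0, Ropp_0, exp_0. field. apply pow_nonzero; auto.
Qed.

Lemma H2_at0 c d m : 0 < d -> c <> d -> (c - d) * (- H2 c d m 0) = (c / d) ^ m - 1.
Proof.
  intros Hd Hcd. induction m.
  - simpl. ring.
  - simpl H2. rewrite G_at0 by lra.
    replace ((c - d) * - (H2 c d m 0 + c ^ m / INR (fact m) * (- INR (fact m) / d ^ S m)))
      with ((c - d) * - H2 c d m 0 + (c - d) * (c ^ m / d ^ S m)).
    2:{ pose proof (factpos m). field. split; [apply pow_nonzero; lra| lra]. }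
    rewrite IHm. simpl. unfold Rdiv. rewrite !Rpow_mult_distr, !pow_inv. field.
    split; [apply pow_nonzero; lra| lra].
Qed.

Lemma H1_at0 c d m : 0 < d -> c <> d ->
  (c - d) ^ 2 * (- H1 c d m 0) = 1 - (INR m + 1) * (c / d) ^ m + INR m * (c / d) ^ (S m).
Proof.
  intros Hd Hcd. induction m.
  - simpl. ring.
  - simpl H1. rewrite G_at0 by lra.
    replace ((c - d) ^ 2 * - (H1 c d m 0 + c ^ m / INR (fact m) * (- INR (fact (S m)) / d ^ S (S m))))
      with ((c - d) ^ 2 * - H1 c d m 0 + (c - d) ^ 2 * (INR (S m) * c ^ m / d ^ S (S m))).
    2:{ rewrite fact_simpl, mult_INR. pose proof (factpos m). field. split; [apply pow_nonzero; lra| lra]. }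
    rewrite IHm. rewrite S_INR. simpl. unfold Rdiv. rewrite !Rpow_mult_distr, !pow_inv. field.
    split; [apply pow_nonzero; lra| lra].
Qed.

Definition cc (n : nat) (w : R) : R := (1 + INR n * w) / w.
Definition dd (n : nat) (w : R) : R := cc n w - 2 * INR n.
Definition F1 n w M := RInt (f1m (cc n w) (dd n w) (2 * n)) 0 M.
Definition F2 n w M := RInt (f2m (cc n w) (dd n w) (2 * n + 1)) 0 M.

Lemma cc_pos n w : 0 < w -> 0 < cc n w.
Proof. intros. unfold cc. pose proof (pos_INR n). apply Rdiv_lt_0_compat; nra. Qed.

Lemma exp_comb n w u : exp (2 * INR n * u) * exp (- (u * (1 + INR n * w) / w)) = exp (- (dd n w * u)).
Proof.
  rewrite <- exp_plus. f_equal. unfold dd, cc. unfold Rdiv. ring.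
Qed.

Lemma I1_eq n w mu : (1 <= n)%nat -> 0 < w -> 0 <= mu -> I1 n w mu = F1 n w (mu / INR n).
Proof.
  intros Hn Hw Hmu. unfold I1, F1.
  assert (HN : 0 < INR n) by (apply lt_0_INR; lia).
  assert (0 <= mu / INR n) by (apply Rdiv_le_0_compat; lra).
  apply RInt_ext. intros u [H1 H2].
  rewrite Rmin_left in H1 by lra.
  assert (Hc := cc_pos n w Hw).
  assert (Hcu : 0 <= u * (1 + INR n * w) / w).
  { replace (u * (1 + INR n * w) / w) with (cc n w * u) by (unfold cc; field; lra). nra. }
  rewrite (Gbar_eq _ (2 * n - 1)) by (auto; rewrite minus_INR by lia; rewrite mult_INR; simpl; ring).
  replace (S (2 * n - 1)) with (2 * n)%nat by lia.
  unfold f1m.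
  replace (u * (1 + INR n * w) / w) with (cc n w * u) by (unfold cc; field; lra).
  rewrite <- exp_comb. unfold cc. replace (u * (1 + INR n * w) / w) with ((1 + INR n * w) / w * u) by (field; lra).
  assert (Hr : forall a b e q : R, a * b * (e * q) = a * (b * e) * q) by (intros; ring). apply Hr.
Qed.

Lemma I2_eq n w mu : (1 <= n)%nat -> 0 < w -> 0 <= mu -> I2 n w mu = F2 n w (mu / INR n).
Proof.
  intros Hn Hw Hmu. unfold I2, F2.
  assert (HN : 0 < INR n) by (apply lt_0_INR; lia).
  assert (0 <= mu / INR n) by (apply Rdiv_le_0_compat; lra).
  apply RInt_ext. intros u [H1 H2].
  rewrite Rmin_left in H1 by lra.
  assert (Hc := cc_pos n w Hw).
  assert (Hcu : 0 <= u * (1 + INR n * w) / w).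
  { replace (u * (1 + INR n * w) / w) with (cc n w * u) by (unfold cc; field; lra). nra. }
  rewrite (Gbar_eq _ (2 * n)) by (auto; rewrite mult_INR; simpl; ring).
  replace (S (2 * n)) with (2 * n + 1)%nat by lia.
  unfold f2m.
  rewrite <- exp_comb. unfold cc. replace (u * (1 + INR n * w) / w) with ((1 + INR n * w) / w * u) by (field; lra).
  assert (Hr : forall b e q : R, b * (e * q) = (b * e) * q) by (intros; ring). apply Hr.
Qed.

Lemma lim_div_pinf f l a : is_lim f p_infty l -> 0 < a -> is_lim (fun x => f (x / a)) p_infty l.
Proof.
  intros Hf Ha.
  apply (is_lim_comp f (fun x => x / a) p_infty l p_infty); auto.
  - apply (is_lim_ext (fun x => / a * x)). { intros; unfold Rdiv; apply Rmult_comm. }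
    replace p_infty with (Rbar_mult (/ a) p_infty) at 2.
    + apply is_lim_scal_l. apply is_lim_id.
    + assert (0 < / a) by (apply Rinv_0_lt_compat; auto).
      simpl. destruct (Rle_dec 0 (/ a)); [|lra]. destruct (Rle_lt_or_eq_dec 0 (/ a) r); [reflexivity| lra].
  - exists 0. intros; discriminate.
Qed.

Lemma lim_pinf_mult_pos f g l : is_lim f p_infty p_infty -> is_lim g p_infty (Finite l) -> 0 < l ->
  is_lim (fun x => f x * g x) p_infty p_infty.
Proof.
  intros Hf Hg Hl.
  replace p_infty with (Rbar_mult p_infty l) at 2.
  - apply is_lim_mult; auto. simpl. lra.
  - simpl. destruct (Rle_dec 0 l); [|lra]. destruct (Rle_lt_or_eq_dec 0 l r); [reflexivity| lra].
Qed.

Lemma lim_pinf_plus_fin f g l : is_lim f p_infty p_infty -> is_lim g p_infty (Finite l) ->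
  is_lim (fun x => f x + g x) p_infty p_infty.
Proof.
  intros Hf Hg. eapply is_lim_plus; eauto. reflexivity.
Qed.

Lemma dd_val n w : 0 < w -> dd n w = 1 / w - INR n.
Proof. intros. unfold dd, cc. field. lra. Qed.

Lemma cd_diff n w : 0 < w -> cc n w - dd n w = 2 * INR n.
Proof. intros. unfold dd. ring. Qed.

Lemma dd_val2 n w : 0 < w -> dd n w = (1 - INR n * w) / w.
Proof. intros. unfold dd, cc. field. lra. Qed.

Lemma wn_lt n w : 0 < INR n -> w < 1 / INR n -> INR n * w < 1.
Proof.
  intros HN H. apply Rmult_lt_compat_l with (r := INR n) in H; auto.
  replace (INR n * (1 / INR n)) with 1 in H by (field; lra). lra.
Qed.

Lemma wn_ge n w : 0 < INR n -> 1 / INR n <= w -> 1 <= INR n * w.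
Proof.
  intros HN H. apply Rmult_le_compat_l with (r := INR n) in H; [|lra].
  replace (INR n * (1 / INR n)) with 1 in H by (field; lra). lra.
Qed.

Lemma dd_pos n w : 0 < w -> INR n * w < 1 -> 0 < dd n w.
Proof. intros. rewrite dd_val2 by auto. apply Rdiv_lt_0_compat; lra. Qed.

Lemma dd_npos n w : 0 < w -> 1 <= INR n * w -> dd n w <= 0.
Proof.
  intros. rewrite dd_val2 by auto. unfold Rdiv.
  assert (0 < / w) by (apply Rinv_0_lt_compat; auto). nra.
Qed.

Lemma I1_lim_conv n w : (2 <= n)%nat -> 0 < w -> w < 1 / INR n ->
  is_lim (I1 n w) p_infty (- H1 (cc n w) (dd n w) (2 * n) 0).
Proof.
  intros Hn Hw Hwn.
  assert (HN : 0 < INR n) by (apply lt_0_INR; lia).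
  assert (Hd : 0 < dd n w) by (apply dd_pos; auto; apply wn_lt; auto).
  apply (is_lim_ext_loc (fun mu => H1 (cc n w) (dd n w) (2 * n) (mu / INR n) - H1 (cc n w) (dd n w) (2 * n) 0)).
  - exists 0. intros mu Hmu. rewrite I1_eq by (auto; lia || lra). unfold F1.
    rewrite RInt_f1m by lra. reflexivity.
  - replace (Finite (- H1 (cc n w) (dd n w) (2 * n) 0)) with (Finite (0 - H1 (cc n w) (dd n w) (2 * n) 0)) by (f_equal; ring).
    apply is_lim_minus'. 
    + apply (lim_div_pinf (H1 (cc n w) (dd n w) (2 * n))); auto. apply H1_lim; auto.
    + apply is_lim_const.
Qed.

Lemma I2_lim_conv n w : (2 <= n)%nat -> 0 < w -> w < 1 / INR n ->
  is_lim (I2 n w) p_infty (- H2 (cc n w) (dd n w) (2 * n + 1) 0).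
Proof.
  intros Hn Hw Hwn.
  assert (HN : 0 < INR n) by (apply lt_0_INR; lia).
  assert (Hd : 0 < dd n w) by (apply dd_pos; auto; apply wn_lt; auto).
  apply (is_lim_ext_loc (fun mu => H2 (cc n w) (dd n w) (2 * n + 1) (mu / INR n) - H2 (cc n w) (dd n w) (2 * n + 1) 0)).
  - exists 0. intros mu Hmu. rewrite I2_eq by (auto; lia || lra). unfold F2.
    rewrite RInt_f2m by lra. reflexivity.
  - replace (Finite (- H2 (cc n w) (dd n w) (2 * n + 1) 0)) with (Finite (0 - H2 (cc n w) (dd n w) (2 * n + 1) 0)) by (f_equal; ring).
    apply is_lim_minus'. 
    + apply (lim_div_pinf (H2 (cc n w) (dd n w) (2 * n + 1))); auto. apply H2_lim; auto.
    + apply is_lim_const.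
Qed.

Lemma ratio_eq n w : 0 < w -> INR n * w < 1 -> cc n w / dd n w = (1 + INR n * w) / (1 - INR n * w).
Proof. intros. rewrite dd_val2 by auto. unfold cc. field. lra. Qed.

Lemma I1lim_eq n w : (2 <= n)%nat -> 0 < w -> INR n * w < 1 ->
  I1lim n w = - H1 (cc n w) (dd n w) (2 * n) 0.
Proof.
  intros Hn Hw Hwn.
  assert (HN : 0 < INR n) by (apply lt_0_INR; lia).
  assert (Hd : 0 < dd n w) by (apply dd_pos; auto).
  assert (Hcd := cd_diff n w Hw).
  pose proof (H1_at0 (cc n w) (dd n w) (2 * n) Hd ltac:(lra)) as H.
  rewrite Hcd, ratio_eq in H by auto. rewrite <- (tech_pow_Rmult _ (2 * n)) in H.
  rewrite mult_INR in H. replace (INR 2) with 2 in H by (simpl; ring).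
  unfold I1lim.
  set (r := (1 + INR n * w) / (1 - INR n * w)) in *.
  set (P := r ^ (2 * n)) in *.
  set (X := - H1 (cc n w) (dd n w) (2 * n) 0) in *.
  assert (HX : X = (1 - (2 * INR n + 1) * P + 2 * INR n * (r * P)) / (4 * INR n ^ 2)).
  { apply Rmult_eq_reg_l with ((2 * INR n) ^ 2).
    - rewrite H. field. lra.
    - apply pow_nonzero. lra. }
  rewrite HX. unfold r. field. lra.
Qed.

Lemma I2lim_eq n w : (2 <= n)%nat -> 0 < w -> INR n * w < 1 ->
  I2lim n w = - H2 (cc n w) (dd n w) (2 * n + 1) 0.
Proof.
  intros Hn Hw Hwn.
  assert (HN : 0 < INR n) by (apply lt_0_INR; lia).
  assert (Hd : 0 < dd n w) by (apply dd_pos; auto).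
  assert (Hcd := cd_diff n w Hw).
  pose proof (H2_at0 (cc n w) (dd n w) (2 * n + 1) Hd ltac:(lra)) as H.
  rewrite Hcd, ratio_eq in H by auto.
  unfold I2lim.
  apply Rmult_eq_reg_l with (2 * INR n); [|lra].
  rewrite <- H. field. lra.
Qed.

Lemma I2lim_pos n w : (2 <= n)%nat -> 0 < w -> INR n * w < 1 -> 0 < I2lim n w.
Proof.
  intros Hn Hw Hwn.
  assert (HN : 0 < INR n) by (apply lt_0_INR; lia).
  unfold I2lim.
  assert (1 < (1 + INR n * w) / (1 - INR n * w)).
  { apply Rmult_lt_reg_r with (1 - INR n * w); [lra|].
    replace ((1 + INR n * w) / (1 - INR n * w) * (1 - INR n * w)) with (1 + INR n * w) by (field; lra).
    nra. }
  assert (1 < ((1 + INR n * w) / (1 - INR n * w)) ^ (2 * n + 1)) by (apply Rlt_pow_R1; auto; lia).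
  apply Rmult_lt_0_compat; [apply Rdiv_lt_0_compat; lra| lra].
Qed.

Lemma lim_affine f l a b : is_lim f p_infty (Finite l) ->
  is_lim (fun x => a + b * f x) p_infty (Finite (a + b * l)).
Proof.
  intros Hf. apply is_lim_plus'. apply is_lim_const.
  apply (is_lim_scal_l f b p_infty l Hf).
Qed.

Lemma lim_inv_den f l a b : is_lim f p_infty (Finite l) -> a + b * l <> 0 ->
  is_lim (fun x => / (a + b * f x)) p_infty (Finite (/ (a + b * l))).
Proof.
  intros Hf Hne. apply (is_lim_inv (fun x => a + b * f x) p_infty (Finite (a + b * l))).
  - apply lim_affine; auto.
  - intros H; injection H; auto.
Qed.

Lemma lim_id_plus1 : is_lim (fun x => 1 + x) p_infty p_infty.
Proof.
  apply (is_lim_ext (fun x => x + 1)). intros; ring.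
  apply (lim_pinf_plus_fin (fun x => x) (fun _ => 1) 1). apply is_lim_id. apply is_lim_const.
Qed.

Lemma lub_pinf (E : R -> Prop) (f : R -> R) :
  is_lim f p_infty p_infty -> (forall mu, 0 <= mu -> E (f mu)) -> Lub_Rbar E = p_infty.
Proof.
  intros Hf HE. apply is_lub_Rbar_unique. split.
  - intros x _. simpl. exact I.
  - intros b Hb. destruct b as [y| |]; simpl; auto.
    + apply is_lim_spec in Hf. destruct (Hf y) as [M HM].
      specialize (HM (Rmax M 0 + 1) ltac:(pose proof (Rmax_l M 0); lra)).
      specialize (Hb _ (HE (Rmax M 0 + 1) ltac:(pose proof (Rmax_r M 0); lra))).
      simpl in Hb. lra.
    + apply (Hb _ (HE 0 (Rle_refl 0))).
Qed.

Lemma conv_part n w : (2 <= n)%nat -> 0 < w -> w < 1 / INR n ->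
  is_lim (I1 n w) p_infty (Finite (I1lim n w)) /\
  is_lim (I2 n w) p_infty (Finite (I2lim n w)) /\
  is_lim (I3 n w) p_infty p_infty /\
  is_lim (I4 n w) p_infty (Finite (I1lim n w / (1 + INR n * I2lim n w))) /\
  is_lim (kfun n w) p_infty p_infty.
Proof.
  intros Hn Hw Hwn.
  assert (HN : 0 < INR n) by (apply lt_0_INR; lia).
  assert (Hwn' := wn_lt n w HN Hwn).
  assert (L1 : is_lim (I1 n w) p_infty (Finite (I1lim n w))).
  { rewrite I1lim_eq by auto. apply I1_lim_conv; auto. }
  assert (L2 : is_lim (I2 n w) p_infty (Finite (I2lim n w))).
  { rewrite I2lim_eq by auto. apply I2_lim_conv; auto. }
  assert (Hpos := I2lim_pos n w Hn Hw Hwn').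
  assert (Hden : 0 < 1 + INR n * I2lim n w) by nra.
  assert (Linv := lim_inv_den (I2 n w) (I2lim n w) 1 (INR n) L2 ltac:(lra)).
  assert (Hinvpos : 0 < / (1 + INR n * I2lim n w)) by (apply Rinv_0_lt_compat; auto).
  assert (L4 : is_lim (I4 n w) p_infty (Finite (I1lim n w / (1 + INR n * I2lim n w)))).
  { apply (is_lim_ext (fun mu => I1 n w mu * / (1 + INR n * I2 n w mu))).
    { intros; reflexivity. }
    apply (is_lim_mult _ _ _ _ _ L1 Linv). simpl. exact I. }
  repeat split; auto.
  - apply (is_lim_ext (fun mu => mu * / (1 + INR n * I2 n w mu))).
    { intros; reflexivity. }
    apply (lim_pinf_mult_pos _ _ _ (is_lim_id p_infty) Linv Hinvpos).
  - apply (is_lim_ext (fun mu => (1 + mu) * / (1 + INR n * I2 n w mu) + (- (2 * INR n ^ 2)) * I4 n w mu)).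
    { intros; unfold kfun, I4, Rdiv; ring. }
    apply (lim_pinf_plus_fin _ _ (- (2 * INR n ^ 2) * (I1lim n w / (1 + INR n * I2lim n w)))).
    + apply (lim_pinf_mult_pos _ _ _ lim_id_plus1 Linv Hinvpos).
    + apply (is_lim_scal_l _ _ _ _ L4).
Qed.

Lemma Q_mono m1 m2 y : (m1 <= m2)%nat -> 0 <= y -> Q m1 y <= Q m2 y.
Proof.
  intros Hm Hy. induction Hm; [lra|].
  simpl. assert (0 <= y ^ m / INR (fact m)) by (apply Rdiv_le_0_compat; [apply pow_le; lra| apply factpos]).
  lra.
Qed.

Lemma Q2 y : Q 2 y = 1 + y.
Proof. simpl. field. Qed.

Lemma Q_term_le m y : 0 <= y -> y ^ m / INR (fact m) <= Q (S m) y.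
Proof. intros Hy. simpl. pose proof (Q_nonneg m y Hy). lra. Qed.

Lemma S_lower m y : 0 <= y -> 0 <= INR m * Q (S m) y - y * Q m y.
Proof.
  intros Hy. induction m.
  - simpl. lra.
  - assert (E : INR (S m) * Q (S (S m)) y - y * Q (S m) y
             = (INR m * Q (S m) y - y * Q m y) + Q (S m) y).
    { change (Q (S (S m)) y) with (Q (S m) y + y ^ (S m) / INR (fact (S m))).
      change (Q (S m) y) with (Q m y + y ^ m / INR (fact m)).
      rewrite fact_simpl, mult_INR, S_INR. simpl pow. pose proof (factpos m).
      field. split; [lra| pose proof (pos_INR m); lra]. }
    rewrite E. pose proof (Q_nonneg (S m) y Hy). lra.
Qed.

Lemma S_upper m y : 0 <= y -> INR m * Q (S m) y - y * Q m y <= INR m * Q m y.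
Proof.
  intros Hy. destruct m.
  - simpl. lra.
  - change (Q (S (S m)) y) with (Q (S m) y + y ^ (S m) / INR (fact (S m))).
    pose proof (Q_term_le m y Hy).
    assert (INR (S m) * (y ^ S m / INR (fact (S m))) = y * (y ^ m / INR (fact m))).
    { rewrite fact_simpl, mult_INR, S_INR. simpl pow. pose proof (factpos m).
      field. split; [lra| pose proof (pos_INR m); lra]. }
    assert (y * (y ^ m / INR (fact m)) <= y * Q (S m) y) by (apply Rmult_le_compat_l; auto).
    nra.
Qed.

Lemma Q_eps m y eps : 0 < eps -> 1 <= y -> INR m * INR (fact m) / eps <= y ->
  Q m y <= eps * (y ^ m / INR (fact m)).
Proof.
  intros He Hy Hy2.
  pose proof (Q_bound m y Hy). pose proof (factpos m).
  assert (INR m <= eps * y / INR (fact m)).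
  { apply Rmult_le_reg_r with (INR (fact m) / eps).
    - apply Rdiv_lt_0_compat; lra.
    - replace (eps * y / INR (fact m) * (INR (fact m) / eps)) with y by (field; lra). lra. }
  assert (Hp : 0 <= y ^ m) by (apply pow_le; lra).
  apply Rmult_le_reg_l with y; [lra|].
  eapply Rle_trans; [exact H|].
  replace (y * (eps * (y ^ m / INR (fact m)))) with ((eps * y / INR (fact m)) * y ^ m) by (field; lra).
  apply Rmult_le_compat_r; auto.
Qed.

Lemma exp_ge1 x : 0 <= x -> 1 <= exp x.
Proof. intros. pose proof (exp_ineq1_le x). lra. Qed.

Lemma f2_ge_lin c d m u : 0 < c -> d <= 0 -> 0 <= u -> (2 <= m)%nat -> 1 + c * u <= f2m c d m u.
Proof.
  intros Hc Hd Hu Hm. unfold f2m.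
  assert (1 <= exp (- (d * u))) by (apply exp_ge1; nra).
  assert (1 + c * u <= Q m (c * u)) by (rewrite <- Q2; apply Q_mono; auto; nra).
  assert (0 <= c * u) by nra.
  assert (Q m (c * u) <= exp (- (d * u)) * Q m (c * u)) by nra.
  lra.
Qed.

Lemma f1_ge c d m u : 0 < c -> d <= 0 -> 0 <= u -> (1 <= m)%nat -> u <= f1m c d m u.
Proof.
  intros Hc Hd Hu Hm. unfold f1m.
  assert (1 <= exp (- (d * u))) by (apply exp_ge1; nra).
  assert (1 <= Q m (c * u)).
  { destruct m; [lia|]. apply Q_S_ge1. nra. }
  assert (u <= u * exp (- (d * u))) by nra.
  assert (u * exp (- (d * u)) <= u * exp (- (d * u)) * Q m (c * u)) by nra.
  lra.
Qed.

Lemma f2_nonneg c d m u : 0 <= c -> 0 <= u -> 0 <= f2m c d m u.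
Proof.
  intros. unfold f2m. pose proof (exp_pos (- (d * u))). pose proof (Q_nonneg m (c * u) ltac:(nra)). nra.
Qed.

Lemma f1_nonneg c d m u : 0 <= c -> 0 <= u -> 0 <= f1m c d m u.
Proof.
  intros. unfold f1m. pose proof (exp_pos (- (d * u))). pose proof (Q_nonneg m (c * u) ltac:(nra)).
  apply Rmult_le_pos; [|auto]. nra.
Qed.

Lemma comb_bounds c d m u : 0 < c -> 0 <= u ->
  0 <= INR m / c * f2m c d (S m) u - f1m c d m u <= INR m / c * f2m c d m u.
Proof.
  intros Hc Hu. unfold f1m, f2m.
  set (y := c * u). assert (Hy : 0 <= y) by (unfold y; nra).
  assert (E1 : INR m / c * (exp (- (d * u)) * Q (S m) y) - u * exp (- (d * u)) * Q m y
             = exp (- (d * u)) / c * (INR m * Q (S m) y - y * Q m y)).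
  { unfold y. field. lra. }
  assert (E2 : INR m / c * (exp (- (d * u)) * Q m y) = exp (- (d * u)) / c * (INR m * Q m y)).
  { field. lra. }
  rewrite E1, E2.
  assert (0 < exp (- (d * u)) / c) by (apply Rdiv_lt_0_compat; auto; apply exp_pos).
  pose proof (S_lower m y Hy). pose proof (S_upper m y Hy).
  split; [nra|]. apply Rmult_le_compat_l; lra.
Qed.

Lemma eps_pt c d m u eps : 0 < c -> 0 < eps -> 1 <= c * u -> INR m * INR (fact m) / eps <= c * u ->
  f2m c d m u <= eps * f2m c d (S m) u.
Proof.
  intros Hc He H1 H2. unfold f2m.
  pose proof (Q_eps m (c * u) eps He H1 H2).
  pose proof (Q_term_le m (c * u) ltac:(lra)).
  pose proof (exp_pos (- (d * u))).
  assert (Q m (c * u) <= eps * Q (S m) (c * u)) by nra.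
  nra.
Qed.

Lemma RInt_comb f g a b x y : ex_RInt f x y -> ex_RInt g x y ->
  RInt (fun u => a * f u + b * g u) x y = a * RInt f x y + b * RInt g x y.
Proof.
  intros Hf Hg.
  rewrite (RInt_plus (fun u => a * f u) (fun u => b * g u)).
  - rewrite (RInt_scal f), (RInt_scal g); auto.
  - apply (ex_RInt_scal f); auto.
  - apply (ex_RInt_scal g); auto.
Qed.

Definition Gi n w M := RInt (f2m (cc n w) (dd n w) (2 * n)) 0 M.

Lemma f2_S n w : f2m (cc n w) (dd n w) (2 * n + 1) = f2m (cc n w) (dd n w) (S (2 * n)).
Proof. rewrite Nat.add_1_r. reflexivity. Qed.

Lemma F2_nonneg n w M : 0 < w -> 0 <= M -> 0 <= F2 n w M.
Proof.
  intros Hw HM. unfold F2. apply RInt_ge_0; auto. apply ex_RInt_f2m.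
  intros; apply f2_nonneg; [pose proof (cc_pos n w Hw); lra| lra].
Qed.

Lemma F1_nonneg n w M : 0 < w -> 0 <= M -> 0 <= F1 n w M.
Proof.
  intros Hw HM. unfold F1. apply RInt_ge_0; auto. apply ex_RInt_f1m.
  intros; apply f1_nonneg; [pose proof (cc_pos n w Hw); lra| lra].
Qed.

Lemma Gi_nonneg n w M : 0 < w -> 0 <= M -> 0 <= Gi n w M.
Proof.
  intros Hw HM. unfold Gi. apply RInt_ge_0; auto. apply ex_RInt_f2m.
  intros; apply f2_nonneg; [pose proof (cc_pos n w Hw); lra| lra].
Qed.

Lemma RInt_lin_poly c M : RInt (fun u => 1 + c * u) 0 M = M + c * M ^ 2 / 2.
Proof.
  apply is_RInt_unique.
  replace (M + c * M ^ 2 / 2) with ((M + c * M ^ 2 / 2) - (0 + c * 0 ^ 2 / 2)) by (replace (0 ^ 2) with 0 by ring; field).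
  apply (is_RInt_derive (fun u => u + c * u ^ 2 / 2) (fun u => 1 + c * u)).
  - intros. auto_derive; auto. simpl; field.
  - intros. apply (@ex_derive_continuous R_AbsRing R_NormedModule). auto_derive; auto.
Qed.

Lemma RInt_id_poly M : RInt (fun u => u) 0 M = M ^ 2 / 2.
Proof.
  apply is_RInt_unique.
  replace (M ^ 2 / 2) with (M ^ 2 / 2 - 0 ^ 2 / 2) by (replace (0 ^ 2) with 0 by ring; field).
  apply (is_RInt_derive (fun u => u ^ 2 / 2) (fun u => u)).
  - intros. auto_derive; auto. simpl; field.
  - intros. apply (@ex_derive_continuous R_AbsRing R_NormedModule). auto_derive; auto.
Qed.

Lemma F2_div_lb n w M : (1 <= n)%nat -> 0 < w -> 1 <= INR n * w -> 0 <= M ->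
  M + cc n w * M ^ 2 / 2 <= F2 n w M.
Proof.
  intros Hn Hw Hwn HM. rewrite <- RInt_lin_poly. unfold F2.
  apply RInt_le; auto.
  - apply (@ex_RInt_continuous R_CompleteNormedModule). intros.
    apply (@ex_derive_continuous R_AbsRing R_NormedModule). auto_derive; auto.
  - apply ex_RInt_f2m.
  - intros u Hu. apply f2_ge_lin; [apply cc_pos; auto| apply dd_npos; auto| lra| lia].
Qed.

Lemma F1_div_lb n w M : (1 <= n)%nat -> 0 < w -> 1 <= INR n * w -> 0 <= M ->
  M ^ 2 / 2 <= F1 n w M.
Proof.
  intros Hn Hw Hwn HM. rewrite <- RInt_id_poly. unfold F1.
  apply RInt_le; auto.
  - apply (@ex_RInt_continuous R_CompleteNormedModule). intros.
    apply (@ex_derive_continuous R_AbsRing R_NormedModule). auto_derive; auto.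
  - apply ex_RInt_f1m.
  - intros u Hu. apply f1_ge; [apply cc_pos; auto| apply dd_npos; auto| lra| lia].
Qed.

Lemma cont_lin (f g : R -> R) a b (x : R) : continuous f x -> continuous g x -> continuous (fun u => a * f u + b * g u) x.
Proof.
  intros Hf Hg.
  apply (@continuous_plus R_UniformSpace R_AbsRing R_NormedModule (fun u => a * f u) (fun u => b * g u)).
  - apply (@continuous_mult R_UniformSpace R_AbsRing (fun _ => a) f); auto.
    apply continuous_const.
  - apply (@continuous_mult R_UniformSpace R_AbsRing (fun _ => b) g); auto.
    apply continuous_const.
Qed.

Lemma comb_int n w M : 0 < w -> 0 <= M ->
  0 <= INR (2 * n) / cc n w * F2 n w M - F1 n w M <= INR (2 * n) / cc n w * Gi n w M.
Proof.
  intros Hw HM. assert (Hc := cc_pos n w Hw).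
  set (L := INR (2 * n) / cc n w).
  assert (E : L * F2 n w M - F1 n w M =
     RInt (fun u => L * f2m (cc n w) (dd n w) (S (2 * n)) u + (-1) * f1m (cc n w) (dd n w) (2 * n) u) 0 M).
  { rewrite (RInt_comb _ _ _ _ _ _ (ex_RInt_f2m (cc n w) (dd n w) (S (2*n)) 0 M) (ex_RInt_f1m (cc n w) (dd n w) (2*n) 0 M)).
    unfold F2, F1. rewrite f2_S. ring. }
  assert (E2 : L * Gi n w M = RInt (fun u => L * f2m (cc n w) (dd n w) (2 * n) u + 0 * f2m (cc n w) (dd n w) (2 * n) u) 0 M).
  { rewrite (RInt_comb _ _ _ _ _ _ (ex_RInt_f2m (cc n w) (dd n w) (2*n) 0 M) (ex_RInt_f2m (cc n w) (dd n w) (2*n) 0 M)).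
    unfold Gi. ring. }
  set (c := cc n w) in *. set (d := dd n w) in *.
  assert (Hex : ex_RInt (fun u => L * f2m c d (S (2 * n)) u + (-1) * f1m c d (2 * n) u) 0 M).
  { apply (@ex_RInt_continuous R_CompleteNormedModule). intros.
    apply cont_lin; [apply f2m_cont| apply f1m_cont]. }
  rewrite E, E2. split.
  - apply RInt_ge_0; auto.
    intros u Hu. pose proof (comb_bounds c d (2 * n) u Hc ltac:(lra)). unfold L. lra.
  - apply RInt_le; auto.
    + apply (@ex_RInt_continuous R_CompleteNormedModule). intros.
      apply cont_lin; apply f2m_cont.
    + intros u Hu. pose proof (comb_bounds c d (2 * n) u Hc ltac:(lra)). unfold L. lra.
Qed.

Lemma Gi_eps n w U M eps : 0 < w -> 0 <= U <= M -> 0 < eps ->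
  (forall u, U < u < M -> f2m (cc n w) (dd n w) (2 * n) u <= eps * f2m (cc n w) (dd n w) (S (2 * n)) u) ->
  Gi n w M <= Gi n w U + eps * F2 n w M.
Proof.
  intros Hw HUM He Hpt. assert (Hc := cc_pos n w Hw).
  unfold Gi, F2. rewrite f2_S.
  set (g := f2m (cc n w) (dd n w) (2 * n)). set (f := f2m (cc n w) (dd n w) (S (2 * n))).
  assert (Hg : forall a b, ex_RInt g a b) by (intros; apply ex_RInt_f2m).
  assert (Hf : forall a b, ex_RInt f a b) by (intros; apply ex_RInt_f2m).
  rewrite <- (RInt_Chasles g 0 U M) by auto.
  rewrite <- (RInt_Chasles f 0 U M) by auto.
  assert (H0 : 0 <= RInt f 0 U).
  { apply RInt_ge_0; [lra| auto|]. intros; apply f2_nonneg; lra. }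
  assert (H1 : RInt g U M <= eps * RInt f U M).
  { assert (Ee : eps * RInt f U M = RInt (fun u => eps * f u + 0 * f u) U M).
    { rewrite (RInt_comb _ _ _ _ _ _ (Hf U M) (Hf U M)). ring. }
    rewrite Ee.
    apply RInt_le; [lra| auto| |].
    - apply (@ex_RInt_continuous R_CompleteNormedModule). intros.
      apply cont_lin; apply f2m_cont.
    - intros u Hu. specialize (Hpt u Hu). unfold g, f. lra. }
  change (plus (RInt g 0 U) (RInt g U M) <= RInt g 0 U + eps * plus (RInt f 0 U) (RInt f U M)).
  assert (0 <= eps * RInt f 0 U) by (apply Rmult_le_pos; lra).
  unfold plus; simpl. lra.
Qed.

Lemma I4_div n w : (2 <= n)%nat -> 0 < w -> 1 <= INR n * w ->
  is_lim (I4 n w) p_infty (Finite (2 * w / (1 + INR n * w))).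
Proof.
  intros Hn Hw Hwn.
  assert (HN : 0 < INR n) by (apply lt_0_INR; lia).
  assert (Hc := cc_pos n w Hw).
  set (c := cc n w) in *.
  set (L := INR (2 * n) / c).
  assert (HL2 : INR (2 * n) = 2 * INR n) by (rewrite mult_INR; simpl; ring).
  assert (HL : 0 < L) by (unfold L; rewrite HL2; apply Rdiv_lt_0_compat; lra).
  assert (HT : 2 * w / (1 + INR n * w) = L / INR n).
  { unfold L, c, cc. rewrite HL2. field. split; [lra| nra]. }
  rewrite HT.
  apply is_lim_spec. intros eps. pose proof (cond_pos eps) as He.
  set (ep := eps * INR n / (2 * L)).
  assert (Hep : 0 < ep) by (unfold ep; apply Rdiv_lt_0_compat; nra).
  set (Y := Rmax 1 (INR (2 * n) * INR (fact (2 * n)) / ep)).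
  set (U := Y / c).
  assert (HY1 : 1 <= Y) by apply Rmax_l.
  assert (HY2 : INR (2 * n) * INR (fact (2 * n)) / ep <= Y) by apply Rmax_r.
  assert (HU : 0 < U) by (unfold U; apply Rdiv_lt_0_compat; lra).
  assert (HGU := Gi_nonneg n w U Hw ltac:(lra)).
  set (K := INR n * L * Gi n w U + L).
  assert (HK : 0 <= K) by (unfold K; assert (0 <= INR n * L * Gi n w U) by (apply Rmult_le_pos; [nra| auto]); lra).
  simpl. exists (Rmax (INR n * U) (2 * K / (INR n * eps))).
  intros mu Hmu.
  assert (Hmu1 : INR n * U < mu) by (eapply Rle_lt_trans; [apply Rmax_l| exact Hmu]).
  assert (Hmu2 : 2 * K / (INR n * eps) < mu) by (eapply Rle_lt_trans; [apply Rmax_r| exact Hmu]).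
  assert (Hmu0 : 0 < mu) by nra.
  set (M := mu / INR n).
  assert (HMU : U < M).
  { unfold M. apply Rmult_lt_reg_r with (INR n); auto. replace (mu / INR n * INR n) with mu by (field; lra). lra. }
  assert (HmuM : mu = INR n * M) by (unfold M; field; lra).
  unfold I4. rewrite I1_eq, I2_eq by (lia || lra). fold M.
  pose proof (comb_int n w M Hw ltac:(lra)) as [A1 A2]. fold c L in A1, A2.
  assert (Heps : Gi n w M <= Gi n w U + ep * F2 n w M).
  { apply Gi_eps; auto; [lra|]. intros u Hu.
    apply eps_pt; auto.
    - assert (Hcu : c * U <= c * u) by (apply Rmult_le_compat_l; lra).
      unfold U in Hcu. replace (c * (Y / c)) with Y in Hcu by (field; lra). fold c. lra.
    - assert (Hcu : c * U <= c * u) by (apply Rmult_le_compat_l; lra).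
      unfold U in Hcu. replace (c * (Y / c)) with Y in Hcu by (field; lra). fold c. lra. }
  assert (HF2 : M <= F2 n w M).
  { pose proof (F2_div_lb n w M ltac:(lia) Hw Hwn ltac:(lra)). fold c in H.
    assert (0 <= c * M ^ 2 / 2) by (apply Rdiv_le_0_compat; [apply Rmult_le_pos; [lra| apply pow2_ge_0]| lra]).
    lra. }
  set (F1M := F1 n w M) in *. set (F2M := F2 n w M) in *. set (GM := Gi n w M) in *.
  set (D := 1 + INR n * F2M).
  assert (HD : mu < D) by (unfold D; nra).
  assert (HDpos : 0 < D) by lra.
  assert (Eq : F1M / D - L / INR n = - ((INR n * (L * F2M - F1M) + L) / (INR n * D))).
  { unfold D. field. split; apply Rgt_not_eq; unfold D in HDpos; lra. }
  rewrite Eq, Rabs_Ropp.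
  assert (Hnum : 0 <= INR n * (L * F2M - F1M) + L) by nra.
  rewrite Rabs_pos_eq by (apply Rdiv_le_0_compat; nra).
  assert (Hb : INR n * (L * F2M - F1M) + L <= K + INR n * L * ep * F2M).
  { unfold K. assert (INR n * (L * F2M - F1M) <= INR n * (L * GM)) by (apply Rmult_le_compat_l; lra). assert (INR n * L * GM <= INR n * L * (Gi n w U + ep * F2M)) by (apply Rmult_le_compat_l; nra). nra. }
  apply Rle_lt_trans with ((K + INR n * L * ep * F2M) / (INR n * D)).
  { apply Rmult_le_compat_r; [| exact Hb]. apply Rlt_le, Rinv_0_lt_compat. nra. }
  assert (E1 : K / (INR n * D) < eps / 2).
  { apply Rmult_lt_reg_r with (INR n * D); [nra|].
    replace (K / (INR n * D) * (INR n * D)) with K by (field; lra).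
    assert (2 * K < INR n * eps * mu).
    { apply Rmult_lt_reg_r with (/ (INR n * eps)). apply Rinv_0_lt_compat; nra.
      replace (INR n * eps * mu * / (INR n * eps)) with mu by (field; lra).
      unfold Rdiv in Hmu2. lra. }
    nra. }
  assert (E2 : INR n * L * ep * F2M / (INR n * D) <= eps / 2).
  { assert (INR n * L * ep = eps * INR n * INR n / 2) by (unfold ep; field; lra).
    apply Rmult_le_reg_r with (INR n * D); [nra|].
    replace (INR n * L * ep * F2M / (INR n * D) * (INR n * D)) with (INR n * L * ep * F2M) by (field; lra).
    rewrite H. unfold D. assert (0 <= F2M) by lra. nra. }
  replace ((K + INR n * L * ep * F2M) / (INR n * D)) with (K / (INR n * D) + INR n * L * ep * F2M / (INR n * D)) by (field; lra).
  lra.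
Qed.

Lemma kfun0 n w : kfun n w 0 = 1.
Proof.
  unfold kfun, I1, I2. replace (0 / INR n) with 0 by (unfold Rdiv; ring).
  rewrite !RInt_point. unfold zero; simpl. field.
Qed.

Lemma kfun_lower n w mu : (2 <= n)%nat -> 0 < w -> 0 <= mu ->
  - (4 * INR n ^ 2 * w) / (1 + INR n * w) < kfun n w mu.
Proof.
  intros Hn Hw Hmu.
  assert (HN : 0 < INR n) by (apply lt_0_INR; lia).
  assert (Hc := cc_pos n w Hw).
  assert (HM : 0 <= mu / INR n) by (apply Rdiv_le_0_compat; lra).
  unfold kfun. rewrite I1_eq, I2_eq by (lia || lra).
  set (M := mu / INR n) in *.
  pose proof (comb_int n w M Hw HM) as [A1 A2].
  pose proof (F2_nonneg n w M Hw HM).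
  set (L := INR (2 * n) / cc n w) in *.
  assert (HL2 : INR (2 * n) = 2 * INR n) by (rewrite mult_INR; simpl; ring).
  assert (HL : 0 < L) by (unfold L; rewrite HL2; apply Rdiv_lt_0_compat; lra).
  assert (HV : 4 * INR n ^ 2 * w / (1 + INR n * w) = 2 * INR n * L).
  { unfold L, cc. rewrite HL2. field. split; [lra| nra]. }
  unfold Rdiv at 1. rewrite Ropp_mult_distr_l_reverse. fold (4 * INR n ^ 2 * w / (1 + INR n * w)). rewrite HV.
  set (D := 1 + INR n * F2 n w M).
  assert (HD : 0 < D) by (unfold D; nra).
  apply Rmult_lt_reg_r with D; auto.
  replace ((1 + mu - 2 * INR n ^ 2 * F1 n w M) / D * D) with (1 + mu - 2 * INR n ^ 2 * F1 n w M) by (field; lra).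
  assert (0 <= 2 * INR n ^ 2 * (L * F2 n w M - F1 n w M)) by (apply Rmult_le_pos; [nra| lra]).
  unfold D. nra.
Qed.

Lemma kfun_upper n w mu : (2 <= n)%nat -> 0 < w -> 1 <= INR n * w -> 0 <= mu -> kfun n w mu <= 1.
Proof.
  intros Hn Hw Hwn Hmu.
  assert (HN : 0 < INR n) by (apply lt_0_INR; lia).
  assert (Hc := cc_pos n w Hw).
  assert (HM : 0 <= mu / INR n) by (apply Rdiv_le_0_compat; lra).
  unfold kfun. rewrite I1_eq, I2_eq by (lia || lra).
  set (M := mu / INR n) in *.
  assert (HmuM : mu = INR n * M) by (unfold M; field; lra).
  pose proof (F2_div_lb n w M ltac:(lia) Hw Hwn HM).
  pose proof (F1_nonneg n w M Hw HM).
  assert (0 <= cc n w * M ^ 2 / 2) by (apply Rdiv_le_0_compat; [apply Rmult_le_pos; [lra| apply pow2_ge_0]| lra]).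
  assert (HF : M <= F2 n w M) by lra.
  set (D := 1 + INR n * F2 n w M).
  assert (HD : 0 < D) by (unfold D; nra).
  apply Rmult_le_reg_r with D; auto.
  replace ((1 + mu - 2 * INR n ^ 2 * F1 n w M) / D * D) with (1 + mu - 2 * INR n ^ 2 * F1 n w M) by (field; lra).
  assert (INR n * M <= INR n * F2 n w M) by (apply Rmult_le_compat_l; lra).
  assert (0 <= 2 * INR n ^ 2 * F1 n w M) by (apply Rmult_le_pos; [nra| lra]).
  unfold D. lra.
Qed.

Lemma J_bound n w mu : (2 <= n)%nat -> 0 < w -> 1 <= INR n * w -> 1 < mu ->
  0 <= I3 n w mu <= (1 + mu) * / (1 + INR n * I2 n w mu) /\
  (1 + mu) * / (1 + INR n * I2 n w mu) <= 4 * INR n / cc n w * / mu.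
Proof.
  intros Hn Hw Hwn Hmu.
  assert (HN : 0 < INR n) by (apply lt_0_INR; lia).
  assert (Hc := cc_pos n w Hw).
  assert (HM : 0 <= mu / INR n) by (apply Rdiv_le_0_compat; lra).
  unfold I3. rewrite I2_eq by (lia || lra).
  set (M := mu / INR n) in *.
  assert (HmuM : mu = INR n * M) by (unfold M; field; lra).
  pose proof (F2_div_lb n w M ltac:(lia) Hw Hwn HM).
  set (c := cc n w) in *.
  set (F := F2 n w M) in *.
  assert (HD : 2 * INR n * (1 + INR n * F) >= c * mu ^ 2).
  { assert (INR n * (M + c * M ^ 2 / 2) <= INR n * F) by (apply Rmult_le_compat_l; lra).
    rewrite HmuM. 
    replace (INR n * (M + c * M ^ 2 / 2)) with (INR n * M + c * (INR n * M) ^ 2 / (2 * INR n)) in H0 by (field; lra).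
    rewrite HmuM in Hmu.
    assert (0 <= INR n * M) by lra.
    apply Rle_ge.
    apply Rmult_le_reg_r with (/ (2 * INR n)). apply Rinv_0_lt_compat; lra.
    replace (2 * INR n * (1 + INR n * F) * / (2 * INR n)) with (1 + INR n * F) by (field; lra).
    unfold Rdiv in H0. lra. }
  assert (Hpos : 0 < 1 + INR n * F) by (assert (0 < c * mu ^ 2) by (apply Rmult_lt_0_compat; [lra| apply pow_lt; lra]); nra).
  assert (Hi : 0 < / (1 + INR n * F)) by (apply Rinv_0_lt_compat; auto).
  repeat split.
  - unfold Rdiv. apply Rmult_le_pos; lra.
  - unfold Rdiv. apply Rmult_le_compat_r; lra.
  - apply Rmult_le_reg_r with ((1 + INR n * F) * mu). apply Rmult_lt_0_compat; lra.
    replace ((1 + mu) * / (1 + INR n * F) * ((1 + INR n * F) * mu)) with ((1 + mu) * mu) by (field; lra).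
    replace (4 * INR n / c * / mu * ((1 + INR n * F) * mu)) with (2 / c * (2 * INR n * (1 + INR n * F))) by (field; lra).
    assert (2 / c * (2 * INR n * (1 + INR n * F)) >= 2 / c * (c * mu ^ 2)).
    { apply Rle_ge, Rmult_le_compat_l; [apply Rlt_le, Rdiv_lt_0_compat; lra| lra]. }
    replace (2 / c * (c * mu ^ 2)) with (2 * mu ^ 2) in H0 by (field; lra).
    nra.
Qed.

Lemma lim_inv_scal a : is_lim (fun mu => a * / mu) p_infty 0.
Proof.
  replace (Finite 0) with (Rbar_mult a 0) by (simpl; f_equal; ring).
  apply (is_lim_scal_l (fun mu => / mu)).
  apply (is_lim_inv (fun mu => mu) p_infty p_infty). apply is_lim_id. discriminate.
Qed.

Lemma div_part n w : (2 <= n)%nat -> 0 < w -> 1 / INR n <= w ->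
  is_lim (I1 n w) p_infty p_infty /\
  is_lim (I2 n w) p_infty p_infty /\
  is_lim (I3 n w) p_infty (Finite 0) /\
  is_lim (kfun n w) p_infty (Finite (- (4 * (INR n) ^ 2 * w) / (1 + INR n * w))).
Proof.
  intros Hn Hw Hwn0.
  assert (HN : 0 < INR n) by (apply lt_0_INR; lia).
  assert (Hwn := wn_ge n w HN Hwn0).
  assert (Hc := cc_pos n w Hw).
  assert (Hlin : is_lim (fun mu => mu / INR n) p_infty p_infty).
  { apply (lim_div_pinf (fun mu => mu)); auto. apply is_lim_id. }
  assert (HJ : is_lim (fun mu => (1 + mu) * / (1 + INR n * I2 n w mu)) p_infty (Finite 0)).
  { apply (is_lim_le_le_loc (fun _ => 0) (fun mu => 4 * INR n / cc n w * / mu)).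
    - exists 1. intros mu Hmu. pose proof (J_bound n w mu Hn Hw Hwn Hmu). lra.
    - apply is_lim_const.
    - apply lim_inv_scal. }
  repeat split.
  - apply (is_lim_le_p_loc (fun mu => mu / INR n + (- (1/2)))).
    + exists 0. intros mu Hmu. rewrite I1_eq by (lia || lra).
      assert (HM : 0 <= mu / INR n) by (apply Rdiv_le_0_compat; lra).
      pose proof (F1_div_lb n w (mu / INR n) ltac:(lia) Hw Hwn HM).
      assert (0 <= (mu / INR n - 1) ^ 2) by apply pow2_ge_0. nra.
    + apply (lim_pinf_plus_fin _ (fun _ => - (1/2)) (- (1/2))); auto. apply is_lim_const.
  - apply (is_lim_le_p_loc (fun mu => mu / INR n)); auto.
    exists 0. intros mu Hmu. rewrite I2_eq by (lia || lra).
    assert (HM : 0 <= mu / INR n) by (apply Rdiv_le_0_compat; lra).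
    pose proof (F2_div_lb n w (mu / INR n) ltac:(lia) Hw Hwn HM).
    assert (0 <= cc n w * (mu / INR n) ^ 2 / 2) by (apply Rdiv_le_0_compat; [apply Rmult_le_pos; [lra| apply pow2_ge_0]| lra]).
    lra.
  - apply (is_lim_le_le_loc (fun _ => 0) (fun mu => (1 + mu) * / (1 + INR n * I2 n w mu))); auto.
    + exists 1. intros mu Hmu. pose proof (J_bound n w mu Hn Hw Hwn Hmu). lra.
    + apply is_lim_const.
  - apply (is_lim_ext (fun mu => (1 + mu) * / (1 + INR n * I2 n w mu) + (- (2 * INR n ^ 2)) * I4 n w mu)).
    { intros; unfold kfun, I4, Rdiv; ring. }
    replace (- (4 * INR n ^ 2 * w) / (1 + INR n * w)) with (0 + (- (2 * INR n ^ 2)) * (2 * w / (1 + INR n * w)))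
      by (field; nra).
    apply is_lim_plus'; auto.
    apply (is_lim_scal_l _ _ _ _ (I4_div n w Hn Hw Hwn)).
Qed.

Theorem lemma4p3 (n : nat) (w : R) (hn : (2 <= n)%nat) (hw : 0 < w) :
  let kset := fun y => exists mu, 0 <= mu /\ y = kfun n w mu in
  (w < 1 / INR n -> is_lim (I1 n w) p_infty (Finite (I1lim n w))) /\
  (1 / INR n <= w -> is_lim (I1 n w) p_infty p_infty) /\
  (w < 1 / INR n -> is_lim (I2 n w) p_infty (Finite (I2lim n w))) /\
  (1 / INR n <= w -> is_lim (I2 n w) p_infty p_infty) /\
  (w < 1 / INR n -> is_lim (I3 n w) p_infty p_infty) /\
  (1 / INR n <= w -> is_lim (I3 n w) p_infty (Finite 0)) /\
  (w < 1 / INR n -> is_lim (I4 n w) p_infty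
                      (Finite (I1lim n w / (1 + INR n * I2lim n w)))) /\
  (1 / INR n <= w -> is_lim (I4 n w) p_infty
                      (Finite (2 * w / (1 + INR n * w)))) /\
  (w < 1 / INR n -> is_lim (kfun n w) p_infty p_infty) /\
  (1 / INR n <= w -> is_lim (kfun n w) p_infty
                      (Finite (- (4 * (INR n) ^ 2 * w) / (1 + INR n * w)))) /\
  (w < 1 / INR n -> Lub_Rbar kset = p_infty) /\
  (1 / INR n <= w -> Lub_Rbar kset = Finite 1) /\
  (1 / INR n <= w -> Glb_Rbar kset = Finite (- (4 * (INR n) ^ 2 * w) / (1 + INR n * w))) /\
  Rbar_le (Finite (- (4 * (INR n) ^ 2 * w) / (1 + INR n * w))) (Glb_Rbar kset).
Proof.
  intros kset.
  assert (HN : 0 < INR n) by (apply lt_0_INR; lia).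
  assert (Hk : forall mu, 0 <= mu -> kset (kfun n w mu)) by (intros mu Hmu; exists mu; auto).
  set (v := - (4 * INR n ^ 2 * w) / (1 + INR n * w)).
  assert (Hlb : is_lb_Rbar kset v).
  { intros x [mu [Hmu ->]]. simpl. apply Rlt_le. apply kfun_lower; auto. }
  repeat split.
  - intros H; apply (conv_part n w hn hw H).
  - intros H; apply (div_part n w hn hw H).
  - intros H; apply (conv_part n w hn hw H).
  - intros H; apply (div_part n w hn hw H).
  - intros H; apply (conv_part n w hn hw H).
  - intros H; apply (div_part n w hn hw H).
  - intros H; apply (conv_part n w hn hw H).
  - intros H; apply I4_div; auto. apply wn_ge; auto.
  - intros H; apply (conv_part n w hn hw H).
  - intros H; apply (div_part n w hn hw H).
  - intros H. apply (lub_pinf kset (kfun n w)); auto. apply (conv_part n w hn hw H).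
  - intros H. apply is_lub_Rbar_unique. split.
    + intros x [mu [Hmu ->]]. simpl. apply kfun_upper; auto. apply wn_ge; auto.
    + intros b Hb. specialize (Hb 1 ltac:(exists 0; split; [lra| symmetry; apply kfun0])). exact Hb.
  - intros H. apply is_glb_Rbar_unique. split; auto.
    intros b Hb. destruct b as [y| |]; simpl.
    + apply Rnot_lt_le. intros Hlt.
      destruct (div_part n w hn hw H) as [_ [_ [_ Hl]]].
      apply is_lim_spec in Hl.
      assert (He : 0 < y - v) by lra.
      destruct (Hl (mkposreal _ He)) as [M HM].
      set (mu := Rmax M 0 + 1).
      assert (Hmu : M < mu) by (unfold mu; pose proof (Rmax_l M 0); lra).
      assert (Hmu0 : 0 <= mu) by (unfold mu; pose proof (Rmax_r M 0); lra).
      specialize (HM mu Hmu). change (Rabs (kfun n w mu - v) < y - v) in HM.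
      specialize (Hb _ (Hk mu Hmu0)). simpl in Hb.
      apply Rabs_lt_between in HM. lra.
    + specialize (Hb _ (Hk 0 (Rle_refl 0))). simpl in Hb. exact Hb.
    + exact I.
  - destruct (Glb_Rbar_correct kset) as [_ Hg]. apply Hg. exact Hlb.
Qed.
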